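(* Let $A$ be a finite tree rooted at $e$, with all arcs directed from the root towards the leaves, let $R\subseteq V(A)$ be a set of destinations containing all leaves of $A$, and let $D\subseteq V(A)$. Let $u\neq e$ be a vertex of $A$ having exactly one child $u_1$, and let $(b,d,\mathrm{load})$ be the window of the solution $\mathcal{S}(D)$ on the arc $a^{u_1}$. Then the window of $\mathcal{S}(D)$ on the arc $a^{u}$ is \[ \begin{cases} (1,\ d+1,\ \mathrm{load}+1) & \text{if } u\in D,\\ (b+1,\ d,\ \mathrm{load}+b+1) & \text{if } u\notin D \text{ and } u\in R,\\ (b,\ d,\ \mathrm{load}+b) & \text{if } u\notin D \text{ and } u\notin R. \end{cases} \]
   Context: Setting (multicast with diffusing nodes): $A$ is a multicast tree for a request $(e,R)$: a tree rooted at the source $e$, arcs directed away from $e$, whose leaves lie in the destination set $R$. A set $D\subseteq V(A)$ is a set of diffusing (branching) nodes. The solution $\mathcal{S}(D)$ is a set of directed paths in $A$ such that: every node of $R$ is the final extremity of exactly one path; every node of $D$ is the final extremity of at most one path; the origin of each path is either $e$ or a node of $D$ which is itself the final extremity of some path; a node of $D$ lies on a path only as its origin or final extremity. As in the paper, $\mathcal{S}(D)$ is taken to be the solution in which each vertex $x\neq e$ of $R\cup D$ is the final extremity of exactly one path, whose origin is the nearest proper ancestor of $x$ belonging to $D\cup\{e\}$. For a vertex $u$, $A^u$ is the subtree of $A$ rooted at $u$, and for $u\neq e$, $a^u$ is the arc joining the parent of $u$ to $u$. The path number $\mathrm{pn}(u)$ is the number of paths of $\mathcal{S}(D)$ that pass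 through $u$ or terminate at $u$ (equivalently, that use the arc $a^u$). The window of $\mathcal{S}(D)$ on arc $a^u$ is the triple $(\mathrm{pn}(u),\ |D\cap V(A^u)|,\ \mathrm{load})$, where $\mathrm{load}=\sum_{w\in V(A^u)}\mathrm{pn}(w)$ is the load of $\mathcal{S}(D)$ in $A^u$, i.e. the number of pairs (path, arc) with the path using the arc, over the arcs of $A^u$ together with $a^u$. *)

(* Defs.v *)
From mathcomp Require Import all_boot.
Set Implicit Arguments. Unset Strict Implicit. Unset Printing Implicit Defensive.

(* A rooted tree on the vertex set T (a finType): root e, parent map p
   with p e = e (dummy value); the arcs are (p v, v) for v <> e,
   directed away from the root. *)

Section Tree.
Variables (T : finType) (e : T) (p : T -> T).

Definition anc (y x : T) : bool := connect (frel p) x y.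

Definition panc (y x : T) : bool := (x != e) && anc y (p x).

Definition is_rooted_tree : Prop := p e = e /\ forall x, anc e x.

Definition is_child (v u : T) : bool := (v != e) && (p v == u).

Definition is_leaf (v : T) : bool := [forall w, ~~ is_child w v].

Definition subtree (u : T) : {set T} := [set w | anc u w].

Variables (D R : {set T}).

Definition is_origin (o x : T) : bool :=
  [&& o \in D :|: [set e], panc o x &
      [forall z, ((z \in D :|: [set e]) && panc z x) ==> anc z o]].

(* pn w : number of paths of S(D) using the arc a^w.  The paths of S(D)
   are indexed by their final extremities x ∈ (R ∪ D) \ {e}; the path of x
   goes from its origin to x, and uses a^w iff w lies on it and is not its
   origin. *)
Definition pn (w : T) : nat :=
  #|[set x | [&& x \in R :|: D, x != e, anc w x &
               [exists o, is_origin o x && panc o w]]]|.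

Definition load (u : T) : nat := \sum_(w in subtree u) pn w.

Definition window (u : T) : nat * nat * nat :=
  (pn u, #|D :&: subtree u|, load u).

End Tree.

(* Main.v *)
Require Import Defs.
From mathcomp Require Import all_boot.
Set Implicit Arguments. Unset Strict Implicit.

Section Aux.
Variables (T : finType) (e : T) (p : T -> T).
Hypothesis Htree : is_rooted_tree e p.

Lemma ancP y x : reflect (exists n, iter n p x = y) (anc p y x).
Proof.
apply: (iffP idP).
  by move=> H; exists (findex p x y); exact: iter_findex.
by case=> n <-; exact: fconnect_iter.
Qed.

Lemma anc_refl x : anc p x x. Proof. exact: connect0. Qed.
Lemma anc_p x : anc p (p x) x. Proof. by apply/ancP; exists 1. Qed.
Lemma anc_trans x y z : anc p y x -> anc p z y -> anc p z x.
Proof. exact: connect_trans. Qed.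

Lemma iter_e n : iter n p e = e.
Proof. by apply: iter_fix; case: Htree. Qed.

Lemma fix_e x : p x = x -> x = e.
Proof.
move=> Hx; case: Htree => _ /(_ x) /ancP [n Hn].
by rewrite iter_fix in Hn.
Qed.

Lemma anc_dec y x : anc p y x -> x = y \/ anc p y (p x).
Proof.
case/ancP=> [[|n]] Hn; first by left.
by right; apply/ancP; exists n; rewrite -iterSr.
Qed.

Lemma iter_mul k n x : iter n p x = x -> iter (k * n) p x = x.
Proof.
move=> H; elim: k => [|k IH] //=; by rewrite mulSn iterD IH H.
Qed.

Lemma anc_antisym x y : anc p x y -> anc p y x -> x = y.
Proof.
case/ancP=> n Hn; case/ancP=> m Hm.
case: (posnP (n + m)) => Hnm.
  move: Hnm => /eqP; rewrite addn_eq0 => /andP [/eqP Hn0 /eqP Hm0].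
  by move: Hn; rewrite Hn0.
have Hc : iter (n + m) p x = x by rewrite iterD Hm.
case: Htree => _ /(_ x) /ancP [k Hk].
have Hx : x = e.
  have := iter_mul k.+1 Hc.
  have Hle : k <= k.+1 * (n + m) by rewrite mulSn (leq_trans (leq_pmulr k Hnm)) // leq_addl.
  by rewrite -(subnK Hle) iterD Hk iter_e => ->.
by rewrite -Hm Hx iter_e.
Qed.

Lemma not_anc_pu u : u != e -> ~~ anc p u (p u).
Proof.
move=> Hu; apply/negP => H.
have := anc_antisym H (anc_p u) => Hpu.
by move/eqP: Hu; apply; apply: fix_e.
Qed.


Variables (D R : {set T}) (u u1 : T).
Hypothesis Hu : u != e.
Hypothesis Hchild : forall v, is_child e p v u = (v == u1).

Lemma Hu1 : (u1 != e) /\ p u1 = u.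
Proof. by have := Hchild u1; rewrite eqxx => /andP [-> /eqP]. Qed.

Lemma sub_child n w : iter n p w = u -> w != u -> anc p u1 w.
Proof.
elim: n w => [|n IH] w /=; first by move=> -> /eqP.
move=> Hn Hwu.
case: (eqVneq (p w) u) => Hpw.
  have : is_child e p w u.
    rewrite /is_child Hpw eqxx andbT; apply/eqP => Hwe.
    by move: Hpw; rewrite Hwe; case: Htree => -> _ Heu; move/eqP: Hu; apply.
  by rewrite Hchild => /eqP ->; apply: anc_refl.
apply: anc_trans (anc_p w) _; apply: (IH (p w)) => //.
by rewrite -iterSr.
Qed.

Lemma anc_u_iff w : anc p u w = (w == u) || anc p u1 w.
Proof.
apply/idP/idP.
  case/ancP=> n Hn; case: (eqVneq w u) => //= Hw.
  exact: sub_child Hn Hw.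
case/orP; first by move/eqP ->; apply: anc_refl.
move=> H; apply: anc_trans H _; case: Hu1 => _ <-; exact: anc_p.
Qed.

Lemma u_notin : ~~ anc p u1 u.
Proof.
apply/negP => H; case: Hu1 => _ Hp.
have : anc p u u1 by rewrite -Hp; apply: anc_p.
move/(anc_antisym H) => Heq.
by move/eqP: Hu; apply; apply: fix_e; rewrite -{1}Heq Hp.
Qed.

Lemma origin_ex x : x != e -> exists o, is_origin e p D o x.
Proof.
move=> Hx; case: Htree => _ /(_ x) /ancP [n Hn].
elim: n x Hx Hn => [|n IH] x Hx Hn; first by move: Hx; rewrite -Hn /= eqxx.
case Hpx : (p x \in D :|: [set e]).
  exists (p x); rewrite /is_origin Hpx /panc Hx anc_refl /=.
  by apply/forallP => z; apply/implyP => /andP [_ ->].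
have Hpxe : p x != e.
  by apply/eqP => Hpe; move: Hpx; rewrite Hpe !inE eqxx orbT.
have Hn2 : iter n p (p x) = e by rewrite -iterSr.
have [o Ho] := IH (p x) Hpxe Hn2.
exists o; move: Ho => /and3P [HoD Hop /forallP Hall].
rewrite /is_origin HoD /panc Hx /=.
apply/andP; split.
  by move: Hop => /andP [_ H]; apply: anc_trans (anc_p _) H.
apply/forallP => z; apply/implyP => /andP [HzD Hz].
apply: (implyP (Hall z)); rewrite HzD /panc Hpxe /=.
case: (anc_dec Hz) => // Hzx.
by move: HzD; rewrite -Hzx Hpx.
Qed.

Lemma ex_equiv x : anc p u1 x -> u \notin D ->
  [exists o, is_origin e p D o x && panc e p o u] =
  [exists o, is_origin e p D o x && panc e p o u1].
Proof.
move=> Hx HuD; case: Hu1 => Hu1e Hp.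
apply/existsP/existsP => [[o /andP [Ho Hpo]] | [o /andP [Ho Hpo]]]; exists o;
  rewrite Ho /=.
  move: Hpo => /andP [_ H]; rewrite /panc Hu1e Hp /=.
  exact: anc_trans (anc_p u) H.
move: Hpo => /andP [_]; rewrite Hp => H; rewrite /panc Hu /=.
case: (anc_dec H) => // Heq.
by move: Ho => /and3P [HoD _ _]; move: HoD; rewrite -Heq !inE (negbTE HuD) (negbTE Hu).
Qed.


Lemma subtree_eq : subtree p u = u |: subtree p u1.
Proof. by apply/setP => w; rewrite /subtree !inE anc_u_iff. Qed.

Lemma u_notin_sub : u \notin subtree p u1.
Proof. by rewrite /subtree inE u_notin. Qed.

Lemma pn_D : u \in D -> pn e p D R u = 1.
Proof.
move=> HuD; rewrite /pn; set S := [set x | _].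
suff -> : S = [set u] by rewrite cards1.
apply/setP => x.
rewrite /S !inE; case: (eqVneq x u) => [->|Hxu].
  rewrite HuD orbT Hu anc_refl /=.
  have [o Ho] := origin_ex Hu.
  apply/existsP; exists o; rewrite Ho /=.
  by move: Ho => /and3P [_ -> _].
apply/negbTE; apply/negP => /and4P [_ Hxe Hux /existsP [o /andP [Ho Hpo]]].
case: (anc_dec Hux) => [/eqP|Hupx]; first by rewrite (negbTE Hxu).
move: Ho => /and3P [_ _ /forallP /(_ u) /implyP].
rewrite !inE HuD /panc Hxe Hupx /= => /(_ isT) Huo.
move: Hpo => /andP [_ Hop].
by have := not_anc_pu Hu; rewrite (anc_trans Hop Huo).
Qed.

Lemma pn_notD : u \notin D -> pn e p D R u = (u \in R) + pn e p D R u1.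
Proof.
move=> HuD; rewrite /pn.
set S := [set x | _ ].
set S1 := [set x | _ ].
have Hu1S : u \notin S1 by rewrite /S1 !inE (negbTE u_notin) !andbF.
have HS : S = if u \in R then u |: S1 else S1.
  apply/setP => x; case: (eqVneq x u) => [->|Hxu].
    rewrite /S !inE (negbTE HuD) orbF Hu anc_refl /=.
    have [o Ho] := origin_ex Hu.
    have -> : [exists o, is_origin e p D o u && panc e p o u].
      apply/existsP; exists o; rewrite Ho /=.
      by move: Ho => /and3P [_ -> _].
    case: (u \in R); first by rewrite !inE eqxx.
    by rewrite andbT; apply/esym/negbTE.
  have -> : x \in S = (x \in S1).
    rewrite /S /S1 !inE anc_u_iff (negbTE Hxu) /=.
    case Hx : (anc p u1 x); last by rewrite !andbF.
    by rewrite ex_equiv.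
  by case: (u \in R); rewrite // !inE (negbTE Hxu).
rewrite HS; case: (u \in R) => //.
by rewrite cardsU1 Hu1S.
Qed.

Lemma load_eq : load e p D R u = pn e p D R u + load e p D R u1.
Proof. by rewrite /load subtree_eq big_setU1 //= u_notin_sub. Qed.

Lemma dcount : #|D :&: subtree p u| = (u \in D) + #|D :&: subtree p u1|.
Proof.
rewrite subtree_eq setIUr; case HuD: (u \in D).
  have -> : D :&: [set u] = [set u] by apply/setP => x; rewrite !inE; case: eqP => [->|]; rewrite ?andbF ?andbT.
  by rewrite cardsU1 in_setI (negbTE u_notin_sub) andbF.
have -> : D :&: [set u] = set0 by apply/setP => x; rewrite !inE; case: eqP => [->|]; rewrite ?andbF ?HuD.
by rewrite set0U.
Qed.

End Aux.

Theorem lemma1 (T : finType) (e : T) (p : T -> T) (R D : {set T})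
  (Htree : is_rooted_tree e p)
  (HR : forall v, is_leaf e p v -> v \in R)
  (u u1 : T) (Hu : u != e)
  (Hchild : forall v, is_child e p v u = (v == u1)) :
  let: (b, d, ld) := window e p D R u1 in
  window e p D R u =
    if u \in D then (1, d.+1, ld.+1)
    else if u \in R then (b.+1, d, ld + b.+1)
    else (b, d, ld + b).
Proof.
rewrite /window /=.
rewrite (load_eq Htree D R Hu Hchild) (dcount Htree D Hu Hchild).
case HuD: (u \in D).
  by rewrite (pn_D Htree R Hu HuD).
rewrite (pn_notD Htree R Hu Hchild (negbT HuD)).
by case: (u \in R); rewrite /= ?add0n ?add1n addnC.
Qed.
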